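(* Let $\pi$ be a propositional formula that is neither a tautology nor a contradiction. Then the formula $[\ddagger\pi](\Box\lnot\pi \lor \Box\pi) \leftrightarrow \Box\bot$ is valid, i.e. true at every world of every model.
   Context: Fix a countable non-empty set $\mathit{At}$ of atoms. Formulas are built from $\top$, atoms $p\in\mathit{At}$, $\lnot$, $\land$, $\Box$ and, for each propositional formula $\pi$, the operator $[\ddagger\pi]$ (read ''after the agent forgets whether $\pi$''); $\bot,\lor,\to,\leftrightarrow$ are defined as usual and $\Diamond\varphi := \lnot\Box\lnot\varphi$, $\langle\ddagger\pi\rangle\varphi:=\lnot[\ddagger\pi]\lnot\varphi$. A model is $\mathcal{M}=\langle W,R,V\rangle$ with $W\neq\varnothing$, $R\subseteq W\times W$ arbitrary, $V:\mathit{At}\to\mathcal{P}(W)$; $\mathcal{M},w\models p$ iff $w\in V(p)$, Boolean clauses as usual, and $\mathcal{M},w\models\Box\varphi$ iff $\mathcal{M},v\models\varphi$ for all $v$ with $wRv$. Clauses: a literal is an atom or its negation; a clause is a finite set $D$ of literals read as $\bigvee D$ ($\bigvee\varnothing:=\bot$); it is tautological if it contains both $p$ and $\lnot p$ for some $p$. For propositional $\pi$, $\mathcal{C}(\pi)$ is the set of all non-tautological clauses $D$ with $\models\pi\to\bigvee D$ such that no proper subset $D'\subsetneq D$ satisfies $\models\pi\to\bigvee D'$. Model operation: for a model $\mathcal{M}$ and a finite family $(D_i)_{i\in I}$ of non-tautological clauses with $0\notin I$, $\mathcal{M}^{(D_i)_{i\in I}}_u=\langle W',R',V'\rangle$ has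 $W'=W\times(\{0\}\cup I)$, $(w,i)R'(v,j)$ iff $wRv$, $(w,0)\in V'(p)$ iff $w\in V(p)$, and for $i\in I$: $(w,i)\in V'(p)$ iff $\lnot p\in D_i$, or $\{p,\lnot p\}\cap D_i=\varnothing$ and $w\in V(p)$. Semantics of forgetting whether: $\mathcal{M},w\models[\ddagger\pi]\varphi$ iff for all $D_1\in\mathcal{C}(\pi)$ and all $D_2\in\mathcal{C}(\lnot\pi)$, $\mathcal{M}^{(D_1,D_2)}_u,(w,0)\models\varphi$ (family indexed by $I=\{1,2\}$). *)

(* Defs.v *)
From HB Require Import structures.
From mathcomp Require Import all_boot.
From mathcomp Require Import finmap.
Set Implicit Arguments. Unset Strict Implicit. Unset Printing Implicit Defensive.
Local Open Scope fset_scope.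

Section Logic.
Variable At : countType.

Inductive pform : Type :=
| PTop : pform
| PAtom : At -> pform
| PNot : pform -> pform
| PAnd : pform -> pform -> pform.

(* Modal formulas with the "forget whether pi" operator [‡pi] for propositional pi. *)
Inductive form : Type :=
| FTop : form
| FAtom : At -> form
| FNot : form -> form
| FAnd : form -> form -> form
| FBox : form -> form
| FForget : pform -> form -> form.

Definition FBot : form := FNot FTop.
Definition FOr (a b : form) : form := FNot (FAnd (FNot a) (FNot b)).
Definition FImpl (a b : form) : form := FOr (FNot a) b.
Definition FIff (a b : form) : form := FAnd (FImpl a b) (FImpl b a).
Definition FDia (a : form) : form := FNot (FBox (FNot a)).

Fixpoint emb (p : pform) : form :=
  match p with
  | PTop => FTop
  | PAtom a => FAtom a
  | PNot q => FNot (emb q)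
  | PAnd q r => FAnd (emb q) (emb r)
  end.

Fixpoint peval (v : At -> bool) (p : pform) : bool :=
  match p with
  | PTop => true
  | PAtom a => v a
  | PNot q => ~~ peval v q
  | PAnd q r => peval v q && peval v r
  end.

Definition ptautology (p : pform) : Prop := forall v, peval v p.
Definition pcontradiction (p : pform) : Prop := forall v, ~~ peval v p.

(* Literals: (p, true) is the atom p, (p, false) is its negation ¬p. *)
Definition literal := (At * bool)%type.
(* A clause is a finite set of literals, read as their disjunction. *)
Definition clause := {fset literal}.

Definition lit_val (v : At -> bool) (l : literal) : bool :=
  if l.2 then v l.1 else ~~ v l.1.

Definition clause_val (v : At -> bool) (D : clause) : Prop :=
  exists2 l, l \in D & lit_val v l.

Definition tautological (D : clause) : Prop :=
  exists p, (p, true) \in D /\ (p, false) \in D.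

Definition entails (p : pform) (D : clause) : Prop :=
  forall v, peval v p -> clause_val v D.

Definition inC (p : pform) (D : clause) : Prop :=
  ~ tautological D /\ entails p D /\
  (forall D' : clause, D' `<=` D -> D' != D -> ~ entails p D').

(* Kripke models (W is any type; nonemptiness is automatic since validity
   is truth at every world w). *)
Record model : Type := Model {
  world : Type;
  rel : world -> world -> Prop;
  val : At -> world -> Prop }.

(* M^{(D_i)_{i in I}}_u with I = {1,...,n} for Ds = [:: D_1; ...; D_n];
   index 0 is the original copy. *)
Arguments rel : clear implicits.
Arguments val : clear implicits.

Definition lit_update (M : model) (Ds : seq clause) : model :=
  @Model (world M * 'I_(size Ds).+1)%type
    (fun x y => rel M x.1 y.1)
    (fun p x =>
       if (x.2 : nat) == 0 then val M p x.1
       else let D := nth fset0 Ds (x.2).-1 in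
            (p, false) \in D \/
            ((p, true) \notin D /\ (p, false) \notin D /\ val M p x.1)).

Fixpoint sat (phi : form) : forall M : model, world M -> Prop :=
  match phi with
  | FTop => fun M w => True
  | FAtom p => fun M w => val M p w
  | FNot a => fun M w => ~ @sat a M w
  | FAnd a b => fun M w => @sat a M w /\ @sat b M w
  | FBox a => fun M w => forall u, rel M w u -> @sat a M u
  | FForget p a => fun M w =>
      forall D1 D2 : clause, inC p D1 -> inC (PNot p) D2 ->
        @sat a (lit_update M [:: D1; D2]) (w, ord0)
  end.

Definition valid (phi : form) : Prop := forall (M : model) (w : world M), @sat phi M w.

End Logic.

(* Main.v *)
Require Import Defs.
From mathcomp Require Import all_boot finmap.
From Stdlib Require Import Classical ClassicalDescription.
Local Open Scope fset_scope.

Section Aux.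
Variable At : countType.

Fixpoint atoms (p : pform At) : seq At :=
  match p with
  | PTop => [::]
  | PAtom a => [:: a]
  | PNot q => atoms q
  | PAnd q r => atoms q ++ atoms r
  end.

Lemma peval_agree (p : pform At) v v' :
  (forall a, a \in atoms p -> v a = v' a) -> peval v p = peval v' p.
Proof.
elim: p => //= [a|q IH|q IHq r IHr] H.
- by apply: H; rewrite inE.
- by rewrite IH.
- rewrite IHq ?IHr // => a Ha; apply: H; by rewrite mem_cat Ha ?orbT.
Qed.

Definition bv {M : model At} (w : world M) (a : At) : bool :=
  if excluded_middle_informative (@Defs.val At M a w) then true else false.

Lemma sat_emb (p : pform At) (M : model At) (w : world M) :
  sat (emb p) w <-> peval (bv w) p.
Proof.
elim: p => /= [|a|q IH|q IHq r IHr].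
- by [].
- rewrite /bv; case: excluded_middle_informative => //; split=> //.
- rewrite IH; case: (peval _ q); split => //= H; exfalso; by apply: H.
- rewrite IHq IHr; case: (peval _ q); case: (peval _ r); split => //=; by case.
Qed.

Lemma minimize (p : pform At) n : forall D : clause At, #|` D| <= n -> entails p D ->
  exists D', D' `<=` D /\ entails p D' /\
    (forall D'' : clause At, D'' `<=` D' -> D'' != D' -> ~ entails p D'').
Proof.
elim: n => [|n IH] D Hn He.
- exists D; split; first exact: fsubset_refl. split=> // D'' Hs Hne.
  have := fproper_ltn_card (A:=D'') (B:=D); rewrite fproperEneq Hne Hs => /(_ isT).
  by move/leq_trans/(_ Hn).
- case: (classic (exists D', D' `<=` D /\ D' != D /\ entails p D')).
  + move=> [D' [Hs [Hne He']]].
    have Hlt : #|` D'| < #|` D| by apply: fproper_ltn_card; rewrite fproperEneq Hne Hs.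
    have [D'' [Hs' [He'' Hm]]] := IH D' (leq_trans (m:=#|` D'|.+1) Hlt Hn) He'.
    exists D''; split=> //; exact: fsubset_trans Hs' Hs.
  + move=> Hno; exists D; split; first exact: fsubset_refl. split=> // D'' Hs Hne He''.
    by apply: Hno; exists D''.
Qed.

Lemma exists_inC (p : pform At) : ~ ptautology p -> exists D, inC p D.
Proof.
move=> Hnt.
have [v Hv] : exists v, ~~ peval v p.
  apply: NNPP => Hc; apply: Hnt => v; apply: NNPP => Hv; apply: Hc; exists v.
  by apply/negP.
pose D0 : clause At := [fset l in map (fun a => (a, ~~ v a)) (atoms p)].
have HD0 : entails p D0.
  move=> v' Hv'; apply: NNPP => Hno.
  suff : peval v p = peval v' p by move=> E; move: Hv; rewrite E Hv'.
  apply: peval_agree => a Ha.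
  have Hin : (a, ~~ v a) \in D0 by rewrite in_fset; apply/mapP; exists a.
  have Hl : ~~ lit_val v' (a, ~~ v a) by apply/negP => Hl; apply: Hno; exists (a, ~~ v a).
  move: Hl; rewrite /lit_val /=; by case: (v a); case: (v' a).
have [D [Hs [He Hm]]] := @minimize p _ D0 (leqnn _) HD0.
exists D; split=> //; move=> [b [Ht Hf]].
have Ht2 := fsubsetP Hs _ Ht.
have Hf2 := fsubsetP Hs _ Hf.
move: Ht2 Hf2; rewrite !in_fset => /mapP [x Hx [E1 E2]] /mapP [y Hy [E3 E4]].
by move: E2 E4; rewrite -E1 -E3 => <-.
Qed.

Lemma copy_false (M : model At) (Ds : seq (clause At)) (x : world (lit_update M Ds))
  (D : clause At) (p : pform At) :
  (x.2 : nat) != 0 -> D = nth fset0 Ds (x.2).-1 -> ~ tautological D -> entails p D ->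
  ~~ peval (bv x) p.
Proof.
move=> Hx HD Hnt He; apply/negP => Hp; have [[b s] Hl Hv] := He _ Hp.
move: Hv; rewrite /lit_val /bv /=; case: excluded_middle_informative => /= Hval;
  move: Hval; rewrite (negPf Hx) -HD.
- case: s Hl => Hl /= [Hf|[Ht _]] // _.
  + by apply: Hnt; exists b.
  + by rewrite Hl in Ht.
- case: s Hl => Hl /= Hn // _; apply: Hn; by left.
Qed.
End Aux.

Theorem proposition1 (At : countType) (a0 : At) (pi : pform At) :
  ~ ptautology pi -> ~ pcontradiction pi ->
  valid (FIff (FForget pi (FOr (FBox (FNot (emb pi))) (FBox (emb pi))))
              (FBox (FBot At))).
Proof.
move=> Hnt Hnc M w /=; split.
- move=> [nnA nB]; apply: nnA => A; apply: nB => u Hu _.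
  have [D1 H1] := @exists_inC At _ Hnt.
  have Hnt2 : ~ ptautology (PNot pi).
    move=> Ht; apply: Hnc => v; exact: Ht.
  have [D2 H2] := @exists_inC At _ Hnt2.
  have := A D1 D2 H1 H2; apply; split.
  + move=> Hb; apply: (Hb (u, Ordinal (isT : 2 < 3)) Hu).
    apply (proj2 (sat_emb _ _ _ _)); apply: negbNE.
    have := @copy_false At M [:: D1; D2] (u, Ordinal (isT : 2 < 3)) D2 (PNot pi) isT erefl.
    by case: H2 => [? [? _]] /(_ _ _) /=; apply.
  + move=> Hb; have := Hb (u, Ordinal (isT : 1 < 3)) Hu; move/(proj1 (sat_emb _ _ _ _)).
    apply/negP.
    have := @copy_false At M [:: D1; D2] (u, Ordinal (isT : 1 < 3)) D1 pi isT erefl.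
    by case: H1 => [? [? _]] /(_ _ _) /=; apply.
- move=> [nnB nA]; apply: nnB => B; apply: nA => D1 D2 _ _ [nX _].
  apply: nX => u Hu; exfalso; by apply: (B u.1 Hu).
Qed.
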